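(* Let $X$ be a list of $m$ inputs and $Y$ a disjoint list of $n$ inputs, with positive sizes; let $sum_x$ and $sum_y$ denote the sums of the sizes of the inputs of $X$ and of $Y$ respectively, and let $q$ be the reducer capacity, where $sum_x>q$ and $sum_y>q$. Then every X2Y mapping schema for $X$ and $Y$ with capacity $q$ has communication cost at least $\frac{2\cdot sum_x\cdot sum_y}{q}$ and uses at least $\frac{2\cdot sum_x\cdot sum_y}{q^2}$ reducers.
   Context: An X2Y mapping schema for lists $X$ and $Y$ with capacity $q$ is an assignment of the inputs of $X\cup Y$ to a collection of reducers (each input may go to several reducers) such that every reducer receives inputs of total size at most $q$ and for every $x\in X$ and $y\in Y$ there is a reducer receiving both. The communication cost is the sum over reducers of the total size of the inputs assigned to it. *)

(* Defs.v *)
From HB Require Import structures.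
From mathcomp Require Import all_boot all_order all_algebra.
Unset Printing Implicit Defensive.
Import Order.TTheory GRing.Theory Num.Theory.
Local Open Scope ring_scope.

(* X = inputs 'I_m with sizes wx, Y = inputs 'I_n with sizes wy (disjoint by
   construction). *)
Record schema (m n : nat) := Schema {
  nred : nat;
  sx : 'I_nred -> {set 'I_m};
  sy : 'I_nred -> {set 'I_n} }.

Section S.
Variables (R : realFieldType) (m n : nat) (wx : 'I_m -> R) (wy : 'I_n -> R).

Definition load (S : schema m n) (r : 'I_(nred m n S)) : R :=
  \sum_(i in sx m n S r) wx i + \sum_(j in sy m n S r) wy j.

Definition is_X2Y_schema (q : R) (S : schema m n) : Prop :=
  (forall r, load S r <= q) /\
  (forall (i : 'I_m) (j : 'I_n), exists r : 'I_(nred m n S), (i \in sx m n S r) && (j \in sy m n S r)).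

Definition comm_cost (S : schema m n) : R := \sum_(r < nred m n S) load S r.

Definition num_reducers (S : schema m n) : nat :=
  #|[set r : 'I_(nred m n S) | (sx m n S r != set0) || (sy m n S r != set0)]|.
End S.

(* Main.v *)
Require Import Defs.
From HB Require Import structures.
From mathcomp Require Import all_boot all_order all_algebra.
From mathcomp Require Import ring lra.
Import Order.TTheory GRing.Theory Num.Theory.
Local Open Scope ring_scope.

Theorem theorem14 (R : realFieldType) (m n : nat)
    (wx : 'I_m -> R) (wy : 'I_n -> R) (q : R)
    (hwx : forall i, 0 < wx i) (hwy : forall j, 0 < wy j)
    (hsx : q < \sum_(i < m) wx i) (hsy : q < \sum_(j < n) wy j)
    (S : schema m n) (hS : is_X2Y_schema R m n wx wy q S) :
  2 * (\sum_(i < m) wx i) * (\sum_(j < n) wy j) / q <= comm_cost R m n wx wy S /\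
  2 * (\sum_(i < m) wx i) * (\sum_(j < n) wy j) / q ^+ 2 <= (num_reducers m n S)%:R.
Proof.
case: hS => hload hcov.
set X := fun r => \sum_(i in sx m n S r) wx i.
set Y := fun r => \sum_(j in sy m n S r) wy j.
have X0 r : 0 <= X r by apply: sumr_ge0 => i _; exact: ltW.
have Y0 r : 0 <= Y r by apply: sumr_ge0 => i _; exact: ltW.
have XYq r : X r + Y r <= q by exact: hload.
set Sx := \sum_(i < m) wx i.
set Sy := \sum_(j < n) wy j.
have Sx0 : 0 <= Sx by apply: sumr_ge0 => i _; exact: ltW.
have Sy0 : 0 <= Sy by apply: sumr_ge0 => i _; exact: ltW.
set F := fun r (i : 'I_m) (j : 'I_n) =>
  if (i \in sx m n S r) && (j \in sy m n S r) then wx i * wy j else 0.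
have K : Sx * Sy <= \sum_(r < nred m n S) X r * Y r.
  have -> : \sum_(r < nred m n S) X r * Y r =
            \sum_(r < nred m n S) \sum_i \sum_j F r i j.
    apply: eq_bigr => r _; rewrite /X /Y big_distrlr /= big_mkcond.
    apply: eq_bigr => i _ /=; rewrite /F.
    case: (i \in sx m n S r) => /=.
      by rewrite big_mkcond.
    by rewrite big1.
  rewrite exchange_big /=.
  rewrite /Sx /Sy big_distrlr /=.
  apply: ler_sum => i _.
  rewrite exchange_big /=.
  apply: ler_sum => j _.
  have [r /andP[hi hj]] := hcov i j.
  rewrite (bigD1 r) //= /F hi hj /= lerDl.
  apply: sumr_ge0 => r' _; case: ifP => _ //.
  by rewrite mulr_ge0 // ltW.
have [qpos | qle] := ltP 0 q.
  split.
    rewrite ler_pdivrMr //.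
    have : 4 * \sum_(r < nred m n S) X r * Y r <= comm_cost R m n wx wy S * q.
      rewrite /comm_cost mulr_sumr mulr_suml; apply: ler_sum => r _.
      rewrite /load -/(X r) -/(Y r).
      have h1 := X0 r; have h2 := Y0 r; have h3 := XYq r.
      have h4 : (X r + Y r) * (X r + Y r) <= (X r + Y r) * q.
        by rewrite ler_wpM2l // addr_ge0.
      have h5 : 0 <= (X r - Y r) * (X r - Y r) by rewrite -expr2 sqr_ge0.
      rewrite mulrA; nra.
    nra.
  rewrite ler_pdivrMr ?exprn_gt0 //.
  set A := [set r : 'I_(nred m n S) | (sx m n S r != set0) || (sy m n S r != set0)].
  have E : \sum_(r < nred m n S) X r * Y r = \sum_(r in A) X r * Y r.
    rewrite (bigID (fun r => r \in A)) /= addrC big1 ?add0r //.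
    move=> r; rewrite inE negb_or !negbK => /andP[/eqP hx /eqP hy].
    by rewrite /X hx big_set0 mul0r.
  have : 4 * \sum_(r in A) X r * Y r <= #|A|%:R * q ^+ 2.
    apply: (@le_trans _ _ (\sum_(r in A) q ^+ 2)); last by rewrite sumr_const mulr_natl.
    rewrite mulr_sumr; apply: ler_sum => r _.
    have h1 := X0 r; have h2 := Y0 r; have h3 := XYq r.
    have h4 : (X r + Y r) * (X r + Y r) <= q * q.
      by rewrite ler_pM // addr_ge0.
    have h5 : 0 <= (X r - Y r) * (X r - Y r) by rewrite -expr2 sqr_ge0.
    rewrite expr2; nra.
  have SS : 0 <= Sx * Sy by rewrite mulr_ge0.
  rewrite /num_reducers -/A -E -mulrA; lra.
have Z : Sx * Sy = 0.
  apply/eqP; rewrite eq_le mulr_ge0 // andbT; apply: (le_trans K).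
  apply: sumr_le0 => r _.
  have := X0 r; have := Y0 r; have := XYq r. nra.
rewrite -!(mulrA 2) Z !(mulr0, mul0r); split.
  rewrite /comm_cost; apply: sumr_ge0 => r _; rewrite /load; exact: addr_ge0 (X0 r) (Y0 r).
by rewrite ler0n.
Qed.
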